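(* There is a computable equivalence structure that is computably categorical but not computably bi-embeddably categorical.
   Context: An equivalence structure $\mathcal{A}=(A,E)$ has universe $A\subseteq\omega$ and an equivalence relation $E$ on $A$; it is computable if its atomic diagram is computable. Two structures are bi-embeddable if each embeds into the other. A computable structure $\mathcal{A}$ is computably bi-embeddably categorical if every computable structure bi-embeddable with $\mathcal{A}$ is bi-embeddable with $\mathcal{A}$ via computable embeddings in both directions. A computable structure $\mathcal{A}$ is computably categorical if for every computable structure $\mathcal{B}$ isomorphic to $\mathcal{A}$ there is a computable isomorphism from $\mathcal{B}$ to $\mathcal{A}$. *)

(* Defs.v *)
From Stdlib Require Import List Arith.
Import ListNotations.

Inductive code : Type :=
| cZero : code
| cSucc : code
| cProj : nat -> code                (* i-th argument (0 if absent) *)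
| cComp : code -> list code -> code
| cPrec : code -> code -> code       (* primitive recursion on first arg *)
| cMu   : code -> code.

Inductive eval : code -> list nat -> nat -> Prop :=
| ev_zero : forall xs, eval cZero xs 0
| ev_succ : forall x xs, eval cSucc (x :: xs) (S x)
| ev_proj : forall i xs, eval (cProj i) xs (nth i xs 0)
| ev_comp : forall f gs xs ys y,
    eval_list gs xs ys -> eval f ys y -> eval (cComp f gs) xs y
| ev_prec0 : forall f g xs y,
    eval f xs y -> eval (cPrec f g) (0 :: xs) y
| ev_precS : forall f g n xs r y,
    eval (cPrec f g) (n :: xs) r -> eval g (n :: r :: xs) y ->
    eval (cPrec f g) (S n :: xs) y
| ev_mu : forall f xs n,
    eval f (n :: xs) 0 ->
    (forall m, m < n -> exists k, eval f (m :: xs) (S k)) ->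
    eval (cMu f) xs n
with eval_list : list code -> list nat -> list nat -> Prop :=
| evl_nil : forall xs, eval_list [] xs []
| evl_cons : forall g gs xs y ys,
    eval g xs y -> eval_list gs xs ys -> eval_list (g :: gs) xs (y :: ys).

Definition computable_fun (f : nat -> nat) : Prop :=
  exists c : code, forall x, eval c [x] (f x).

Definition computable_pred (P : nat -> Prop) : Prop :=
  exists c : code, forall x,
    (P x -> eval c [x] 1) /\ (~ P x -> eval c [x] 0).

Definition computable_rel (R : nat -> nat -> Prop) : Prop :=
  exists c : code, forall x y,
    (R x y -> eval c [x; y] 1) /\ (~ R x y -> eval c [x; y] 0).

Record EqStr : Type := {
  univ : nat -> Prop;
  rel  : nat -> nat -> Prop;
  rel_dom   : forall x y, rel x y -> univ x /\ univ y;
  rel_refl  : forall x, univ x -> rel x x;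
  rel_sym   : forall x y, rel x y -> rel y x;
  rel_trans : forall x y z, rel x y -> rel y z -> rel x z
}.

Definition computable_str (A : EqStr) : Prop :=
  computable_pred (univ A) /\ computable_rel (rel A).

Definition is_embedding (A B : EqStr) (f : nat -> nat) : Prop :=
  (forall x, univ A x -> univ B (f x)) /\
  (forall x y, univ A x -> univ A y -> f x = f y -> x = y) /\
  (forall x y, univ A x -> univ A y -> (rel A x y <-> rel B (f x) (f y))).

Definition is_iso (A B : EqStr) (f : nat -> nat) : Prop :=
  is_embedding A B f /\ (forall y, univ B y -> exists x, univ A x /\ f x = y).

Definition embeds (A B : EqStr) : Prop := exists f, is_embedding A B f.
Definition bi_embeddable (A B : EqStr) : Prop := embeds A B /\ embeds B A.
Definition isomorphic (A B : EqStr) : Prop := exists f, is_iso A B f.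

Definition comp_categorical (A : EqStr) : Prop :=
  forall B : EqStr, computable_str B -> isomorphic B A ->
    exists f, computable_fun f /\ is_iso B A f.

Definition comp_bi_emb_categorical (A : EqStr) : Prop :=
  forall B : EqStr, computable_str B -> bi_embeddable A B ->
    exists f g, computable_fun f /\ computable_fun g /\
      is_embedding A B f /\ is_embedding B A g.

(* Main.v *)
Require Import Defs.
From Stdlib Require Import List Arith Lia Classical ClassicalEpsilon.
Import ListNotations.

Definition C1 (f : nat -> nat) : Prop := computable_fun f.
Definition C2 (f : nat -> nat -> nat) : Prop :=
  exists c, forall x y, eval c [x; y] (f x y).
Definition C3 (f : nat -> nat -> nat -> nat) : Prop :=
  exists c, forall x y z, eval c [x; y; z] (f x y z).

Fixpoint constc (n : nat) : code :=
  match n with 0 => cZero | S n => cComp cSucc [constc n] end.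

Lemma eval_const n xs : eval (constc n) xs n.
Proof.
  induction n; simpl.
  - constructor.
  - econstructor. econstructor. exact IHn. constructor. constructor.
Qed.

Lemma C1_id : C1 (fun x => x).
Proof. exists (cProj 0). intro x. exact (ev_proj 0 [x]). Qed.

Lemma C1_const n : C1 (fun _ => n).
Proof. exists (constc n). intro; apply eval_const. Qed.

Lemma C1_S : C1 S.
Proof. exists cSucc. intro; constructor. Qed.

Lemma C1_comp h f : C1 h -> C1 f -> C1 (fun x => h (f x)).
Proof.
  intros [ch Hh] [cf Hf]. exists (cComp ch [cf]). intro x.
  econstructor. econstructor. apply Hf. constructor. apply Hh.
Qed.

Lemma C1_comp2 h f g : C2 h -> C1 f -> C1 g -> C1 (fun x => h (f x) (g x)).
Proof.
  intros [ch Hh] [cf Hf] [cg Hg]. exists (cComp ch [cf; cg]). intro x.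
  econstructor. econstructor. apply Hf. econstructor. apply Hg. constructor. apply Hh.
Qed.

Lemma C2_comp1 h f : C1 h -> C2 f -> C2 (fun x y => h (f x y)).
Proof.
  intros [ch Hh] [cf Hf]. exists (cComp ch [cf]). intros x y.
  econstructor. econstructor. apply Hf. constructor. apply Hh.
Qed.

Lemma C2_comp2 h f g : C2 h -> C2 f -> C2 g -> C2 (fun x y => h (f x y) (g x y)).
Proof.
  intros [ch Hh] [cf Hf] [cg Hg]. exists (cComp ch [cf; cg]). intros x y.
  econstructor. econstructor. apply Hf. econstructor. apply Hg. constructor. apply Hh.
Qed.

Lemma C2_pr1 : C2 (fun x y => x).
Proof. exists (cProj 0). intros x y. exact (ev_proj 0 [x;y]). Qed.
Lemma C2_pr2 : C2 (fun x y => y).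
Proof. exists (cProj 1). intros x y. exact (ev_proj 1 [x;y]). Qed.
Lemma C2_const n : C2 (fun _ _ => n).
Proof. exists (constc n). intros; apply eval_const. Qed.

Lemma C3_comp2 h : C2 h -> C3 (fun x r y => h r y).
Proof.
  intros [ch Hh]. exists (cComp ch [cProj 1; cProj 2]). intros x r y.
  econstructor. econstructor. exact (ev_proj 1 [x;r;y]).
  econstructor. exact (ev_proj 2 [x;r;y]). constructor. apply Hh.
Qed.

Fixpoint natrec (a : nat) (h : nat -> nat -> nat) (n : nat) : nat :=
  match n with 0 => a | S n => h n (natrec a h n) end.

Lemma C1_natrec a h : C2 h -> C1 (natrec a h).
Proof.
  intros [ch Hh]. exists (cPrec (constc a) ch). intro n.
  induction n; simpl.
  - constructor. apply eval_const.
  - econstructor. exact IHn. apply Hh.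
Qed.

Fixpoint natrec2 (g : nat -> nat) (h : nat -> nat -> nat -> nat) (n y : nat) : nat :=
  match n with 0 => g y | S n => h n (natrec2 g h n y) y end.

Lemma C2_natrec2 g h : C1 g -> C3 h -> C2 (natrec2 g h).
Proof.
  intros [cg Hg] [ch Hh]. exists (cPrec cg ch). intros n y.
  induction n; simpl.
  - constructor. apply Hg.
  - econstructor. exact IHn. apply Hh.
Qed.

Lemma C2_ext f g : C2 f -> (forall x y, f x y = g x y) -> C2 g.
Proof. intros [c H] E. exists c. intros; rewrite <- E; auto. Qed.
Lemma C1_ext f g : C1 f -> (forall x, f x = g x) -> C1 g.
Proof. intros [c H] E. exists c. intros; rewrite <- E; auto. Qed.

Lemma C2_add : C2 Nat.add.
Proof.
  apply (C2_ext (natrec2 (fun y => y) (fun n r y => S r))).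
  - apply C2_natrec2. apply C1_id. apply (C3_comp2 (fun r y => S r)).
    apply (C2_comp1 S (fun r y => r)). apply C1_S. apply C2_pr1.
  - induction x; simpl; auto.
Qed.

Lemma C2_mul : C2 Nat.mul.
Proof.
  apply (C2_ext (natrec2 (fun y => 0) (fun n r y => r + y))).
  - apply C2_natrec2. apply C1_const. apply (C3_comp2 (fun r y => r + y)).
    apply C2_add.
  - induction x; simpl; intros; auto. rewrite IHx. lia.
Qed.

Lemma C1_pred : C1 pred.
Proof.
  apply (C1_ext (natrec 0 (fun n r => n))).
  - apply C1_natrec. apply C2_pr1.
  - destruct x; reflexivity.
Qed.

Lemma C2_subr : C2 (fun n x => x - n).
Proof.
  apply (C2_ext (natrec2 (fun y => y) (fun n r y => pred r))).
  - apply C2_natrec2. apply C1_id. apply (C3_comp2 (fun r y => pred r)).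
    apply (C2_comp1 pred (fun r y => r)). apply C1_pred. apply C2_pr1.
  - induction x; simpl; intros. lia. rewrite IHx. lia.
Qed.

Definition isz (n : nat) : nat := match n with 0 => 1 | _ => 0 end.
Lemma C1_isz : C1 isz.
Proof.
  apply (C1_ext (natrec 1 (fun _ _ => 0))).
  - apply C1_natrec. apply C2_const.
  - destruct x; reflexivity.
Qed.

Lemma C2_iter f : C1 f -> C2 (fun n z => Nat.iter n f z).
Proof.
  intros [cf Hf]. exists (cPrec (cProj 0) (cComp cf [cProj 1])). intros n z.
  induction n; simpl.
  - constructor. exact (ev_proj 0 [z]).
  - econstructor. exact IHn. econstructor. econstructor.
    exact (ev_proj 1 [n; Nat.iter n f z; z]). constructor. apply Hf.
Qed.

Lemma C1_add a b : C1 a -> C1 b -> C1 (fun x => a x + b x).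
Proof. intros; apply (C1_comp2 Nat.add); auto using C2_add. Qed.
Lemma C1_mul a b : C1 a -> C1 b -> C1 (fun x => a x * b x).
Proof. intros; apply (C1_comp2 Nat.mul); auto using C2_mul. Qed.
Lemma C1_sub a b : C1 a -> C1 b -> C1 (fun x => a x - b x).
Proof. intros; apply (C1_comp2 (fun n x => x - n) b a); auto using C2_subr. Qed.
Lemma C1_Sc a : C1 a -> C1 (fun x => S (a x)).
Proof. intros; apply (C1_comp S a); auto using C1_S. Qed.
Lemma C1_predc a : C1 a -> C1 (fun x => pred (a x)).
Proof. intros; apply (C1_comp pred a); auto using C1_pred. Qed.
Lemma C1_iszc a : C1 a -> C1 (fun x => isz (a x)).
Proof. intros; apply (C1_comp isz a); auto using C1_isz. Qed.
Lemma C1_max a b : C1 a -> C1 b -> C1 (fun x => Nat.max (a x) (b x)).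
Proof.
  intros. apply (C1_ext (fun x => a x + (b x - a x))).
  apply C1_add; auto. apply C1_sub; auto. intros; lia.
Qed.
Lemma C1_iterc f n z : C1 f -> C1 n -> C1 z -> C1 (fun x => Nat.iter (n x) f (z x)).
Proof. intros; apply (C1_comp2 (fun n z => Nat.iter n f z)); auto using C2_iter. Qed.

Lemma C1_eqb a b : C1 a -> C1 b -> C1 (fun x => Nat.b2n (Nat.eqb (a x) (b x))).
Proof.
  intros. apply (C1_ext (fun x => isz ((a x - b x) + (b x - a x)))).
  apply C1_iszc, C1_add; apply C1_sub; auto.
  intro x. destruct (Nat.eqb_spec (a x) (b x)).
  rewrite e, Nat.sub_diag. reflexivity.
  destruct (a x - b x + (b x - a x)) eqn:E. lia. reflexivity.
Qed.
Lemma C1_leb a b : C1 a -> C1 b -> C1 (fun x => Nat.b2n (Nat.leb (a x) (b x))).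
Proof.
  intros. apply (C1_ext (fun x => isz (a x - b x))).
  apply C1_iszc, C1_sub; auto.
  intro x. destruct (Nat.leb_spec (a x) (b x)).
  replace (a x - b x) with 0 by lia. reflexivity.
  destruct (a x - b x) eqn:E. lia. reflexivity.
Qed.
Lemma C1_andb a b : C1 (fun x => Nat.b2n (a x)) -> C1 (fun x => Nat.b2n (b x)) ->
  C1 (fun x => Nat.b2n (a x && b x)).
Proof.
  intros. apply (C1_ext (fun x => Nat.b2n (a x) * Nat.b2n (b x))).
  apply C1_mul; auto. intro x; destruct (a x), (b x); reflexivity.
Qed.
Lemma C1_negb a : C1 (fun x => Nat.b2n (a x)) -> C1 (fun x => Nat.b2n (negb (a x))).
Proof.
  intros. apply (C1_ext (fun x => 1 - Nat.b2n (a x))).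
  apply C1_sub; auto using C1_const. intro x; destruct (a x); reflexivity.
Qed.
Lemma C1_if (b : nat -> bool) f g : C1 (fun x => Nat.b2n (b x)) -> C1 f -> C1 g ->
  C1 (fun x => if b x then f x else g x).
Proof.
  intros. apply (C1_ext (fun x => f x * Nat.b2n (b x) + g x * (1 - Nat.b2n (b x)))).
  apply C1_add; apply C1_mul; auto. apply C1_sub; auto using C1_const.
  intro x; destruct (b x); simpl; lia.
Qed.

Fixpoint T (w : nat) : nat := match w with 0 => 0 | S w => T w + S w end.
Definition cp (a b : nat) : nat := T (a + b) + b.
Fixpoint W (z : nat) : nat :=
  match z with 0 => 0 | S z => W z + isz (T (S (W z)) - S z) end.
Definition p2 (z : nat) : nat := z - T (W z).
Definition p1 (z : nat) : nat := W z - p2 z.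

Lemma T_mono a b : a <= b -> T a <= T b.
Proof. induction 1; simpl; lia. Qed.

Lemma W_spec z : T (W z) <= z < T (S (W z)).
Proof.
  induction z. simpl; lia. cbn [W].
  destruct (T (S (W z)) - S z) eqn:E; cbn [isz].
  - rewrite Nat.add_1_r. simpl in *. lia.
  - rewrite Nat.add_0_r. simpl in *. lia.
Qed.

Lemma W_unique w z : T w <= z < T (S w) -> W z = w.
Proof.
  intros H. pose proof (W_spec z).
  destruct (Nat.lt_trichotomy (W z) w) as [L|[L|L]]; auto.
  - assert (T (S (W z)) <= T w) by (apply T_mono; lia). lia.
  - assert (T (S w) <= T (W z)) by (apply T_mono; lia). lia.
Qed.

Lemma W_cp a b : W (cp a b) = a + b.
Proof. apply W_unique. unfold cp. simpl. lia. Qed.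

Lemma p1_cp a b : p1 (cp a b) = a.
Proof. unfold p1, p2. rewrite W_cp. unfold cp. lia. Qed.
Lemma p2_cp a b : p2 (cp a b) = b.
Proof. unfold p2. rewrite W_cp. unfold cp. lia. Qed.
Lemma cp_p z : cp (p1 z) (p2 z) = z.
Proof.
  pose proof (W_spec z). simpl in H. unfold p1, p2, cp.
  replace (W z - (z - T (W z)) + (z - T (W z))) with (W z) by lia. lia.
Qed.
Lemma cp_inj a b c d : cp a b = cp c d -> a = c /\ b = d.
Proof.
  intro H. split.
  rewrite <- (p1_cp a b), H, p1_cp; auto.
  rewrite <- (p2_cp a b), H, p2_cp; auto.
Qed.
Lemma cp_ge2 a b : b <= cp a b.
Proof. unfold cp; lia. Qed.
Lemma cp_ge1 a b : a <= cp a b.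
Proof. unfold cp. assert (a + b <= T (a+b)) by (induction (a+b); simpl; lia). lia. Qed.

Lemma C1_T : C1 T.
Proof.
  apply (C1_ext (natrec 0 (fun n r => r + S n))).
  - apply C1_natrec. apply (C2_comp2 Nat.add). apply C2_add. apply C2_pr2.
    apply (C2_comp1 S (fun n r => n)). apply C1_S. apply C2_pr1.
  - induction x; [reflexivity | cbn [natrec W T]; rewrite IHx; reflexivity].
Qed.

Lemma C1_W : C1 W.
Proof.
  apply (C1_ext (natrec 0 (fun n r => r + isz (T (S r) - S n)))).
  - apply C1_natrec. apply (C2_comp2 Nat.add). apply C2_add. apply C2_pr2.
    apply (C2_comp1 isz). apply C1_isz.
    apply (C2_comp2 (fun n x => x - n) (fun n r => S n) (fun n r => T (S r))).
    apply C2_subr. apply (C2_comp1 S (fun n r => n)). apply C1_S. apply C2_pr1.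
    apply (C2_comp1 (fun r => T (S r)) (fun n r => r)).
    apply (C1_comp T S). apply C1_T. apply C1_S. apply C2_pr2.
  - induction x. reflexivity.
    change (natrec 0 (fun n r => r + isz (T (S r) - S n)) (S x)) with
      (natrec 0 (fun n r => r + isz (T (S r) - S n)) x + isz (T (S (natrec 0 (fun n r => r + isz (T (S r) - S n)) x)) - S x)).
    rewrite IHx. reflexivity.
Qed.

Lemma C1_cp a b : C1 a -> C1 b -> C1 (fun x => cp (a x) (b x)).
Proof.
  intros. unfold cp. apply C1_add; auto. apply (C1_comp T). apply C1_T. apply C1_add; auto.
Qed.
Lemma C1_p2 a : C1 a -> C1 (fun x => p2 (a x)).
Proof.
  intros. unfold p2. apply C1_sub; auto. apply (C1_comp T). apply C1_T. apply (C1_comp W); auto using C1_W.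
Qed.
Lemma C1_p1 a : C1 a -> C1 (fun x => p1 (a x)).
Proof.
  intros. unfold p1. apply C1_sub; auto using C1_p2. apply (C1_comp W); auto using C1_W.
Qed.

Lemma C2_cp : C2 cp.
Proof.
  unfold cp. apply (C2_comp2 Nat.add (fun x y => T (x + y)) (fun x y => y)).
  apply C2_add. apply (C2_comp1 T). apply C1_T. apply C2_add. apply C2_pr2.
Qed.

Lemma C2_of_C1 F : C1 F -> C2 (fun x y => F (cp x y)).
Proof. intros. apply (C2_comp1 F cp); auto using C2_cp. Qed.

Global Opaque cp p1 p2.

Definition ccons (x l : nat) : nat := S (cp x l).
Definition chd (l : nat) : nat := p1 (pred l).
Definition ctl (l : nat) : nat := p2 (pred l).
Fixpoint encl (xs : list nat) : nat :=
  match xs with [] => 0 | x :: xs => ccons x (encl xs) end.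
Lemma chd_cons x l : chd (ccons x l) = x.
Proof. unfold chd, ccons. simpl. apply p1_cp. Qed.
Lemma ctl_cons x l : ctl (ccons x l) = l.
Proof. unfold ctl, ccons. simpl. apply p2_cp. Qed.
Lemma ccons_neq0 x l : ccons x l <> 0.
Proof. unfold ccons; lia. Qed.
Lemma ccons_gt x l : l < ccons x l.
Proof. unfold ccons. pose proof (cp_ge2 x l). lia. Qed.
Lemma chd0 : chd 0 = 0.
Proof. unfold chd. simpl. change 0 with (cp 0 0) at 1. apply p1_cp. Qed.
Lemma ctl0 : ctl 0 = 0.
Proof. unfold ctl. simpl. Transparent cp. change 0 with (cp 0 0) at 1. Opaque cp. apply p2_cp. Qed.

Definition cnth (i l : nat) : nat := chd (Nat.iter i ctl l).
Lemma iter_ctl0 k : Nat.iter k ctl 0 = 0.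
Proof. induction k; simpl; auto. rewrite IHk. apply ctl0. Qed.

Lemma cnth_ok i xs : cnth i (encl xs) = nth i xs 0.
Proof.
  unfold cnth. revert xs. induction i; intros xs.
  - destruct xs; simpl. apply chd0. apply chd_cons.
  - rewrite Nat.iter_succ_r. destruct xs.
    + simpl. rewrite ctl0, iter_ctl0. apply chd0.
    + simpl encl. rewrite ctl_cons. apply IHi.
Qed.

Definition revstep (p : nat) : nat :=
  if Nat.eqb (p1 p) 0 then p else cp (ctl (p1 p)) (ccons (chd (p1 p)) (p2 p)).
Definition crev (l : nat) : nat := p2 (Nat.iter l revstep (cp l 0)).

Lemma revstep_iter : forall xs acc k, length xs <= k ->
  Nat.iter k revstep (cp (encl xs) (encl acc)) = cp 0 (encl (rev xs ++ acc)).
Proof.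
  induction xs; intros acc k Hk.
  - simpl. induction k. reflexivity. rewrite Nat.iter_succ_r.
    unfold revstep at 2. rewrite p1_cp. apply IHk. simpl; lia.
  - destruct k. simpl in Hk; lia. rewrite Nat.iter_succ_r. unfold revstep at 2.
    simpl encl. rewrite p1_cp, p2_cp.
    destruct (Nat.eqb_spec (ccons a (encl xs)) 0). exfalso; eapply ccons_neq0; eauto.
    rewrite ctl_cons, chd_cons. change (ccons a (encl acc)) with (encl (a :: acc)).
    rewrite IHxs by (simpl in Hk; lia). simpl. rewrite <- app_assoc. reflexivity.
Qed.

Lemma encl_len xs : length xs <= encl xs.
Proof. induction xs; simpl; auto. pose proof (ccons_gt a (encl xs)). lia. Qed.

Lemma crev_ok xs : crev (encl xs) = encl (rev xs).
Proof.
  unfold crev. replace (cp (encl xs) 0) with (cp (encl xs) (encl [])) by reflexivity.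
  rewrite revstep_iter by apply encl_len.
  rewrite p2_cp, app_nil_r. reflexivity.
Qed.

Lemma encl_eq0 xs : encl xs = 0 <-> xs = [].
Proof. destruct xs; simpl; split; intro H; try congruence. exfalso; eapply ccons_neq0; eauto. Qed.

Fixpoint fold_b (q : nat -> nat) (comb : nat -> nat -> nat) (a n : nat) : nat :=
  match n with 0 => 0 | S n => comb (fold_b q comb a n) (q (cp a n)) end.

Lemma C1_app2 (h : nat -> nat -> nat) a b :
  C1 (fun p => h (p1 p) (p2 p)) -> C1 a -> C1 b -> C1 (fun x => h (a x) (b x)).
Proof.
  intros H Ha Hb. apply (C1_ext (fun x => (fun p => h (p1 p) (p2 p)) (cp (a x) (b x)))).
  apply (C1_comp (fun p => h (p1 p) (p2 p)) (fun x => cp (a x) (b x))); auto. apply C1_cp; auto.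
  intro x. simpl. rewrite p1_cp, p2_cp. reflexivity.
Qed.

Definition foldstep (q : nat -> nat) (comb : nat -> nat -> nat) (p : nat) : nat :=
  cp (S (p1 p)) (cp (comb (p1 (p2 p)) (q (cp (p2 (p2 p)) (p1 p)))) (p2 (p2 p))).

Lemma foldstep_iter q comb a n :
  Nat.iter n (foldstep q comb) (cp 0 (cp 0 a)) = cp n (cp (fold_b q comb a n) a).
Proof.
  induction n. reflexivity. simpl. rewrite IHn. unfold foldstep.
  repeat rewrite ?p1_cp, ?p2_cp. reflexivity.
Qed.

Lemma C1_fold q comb a n : C1 q -> C1 (fun p => comb (p1 p) (p2 p)) -> C1 a -> C1 n ->
  C1 (fun x => fold_b q comb (a x) (n x)).
Proof.
  intros Hq Hc Ha Hn.
  apply (C1_ext (fun x => p1 (p2 (Nat.iter (n x) (foldstep q comb) (cp 0 (cp 0 (a x))))))).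
  - apply C1_p1, C1_p2. apply C1_iterc; auto.
    + unfold foldstep. apply C1_cp. apply C1_Sc, C1_p1, C1_id.
      apply C1_cp. apply (C1_app2 comb). auto. apply C1_p1, C1_p2, C1_id.
      apply (C1_comp q); auto. apply C1_cp. apply C1_p2, C1_p2, C1_id. apply C1_p1, C1_id.
      apply C1_p2, C1_p2, C1_id.
    + apply C1_cp. apply C1_const. apply C1_cp. apply C1_const. auto.
  - intro x. rewrite foldstep_iter, p2_cp, p1_cp. reflexivity.
Qed.

Create HintDb c1db.

Ltac c1 :=
  match goal with
  | |- C1 (fun x => x) => exact C1_id
  | |- C1 (fun _ => ?c) => exact (C1_const c)
  | |- C1 (fun x => if @?b x then @?f x else @?g x) => apply (C1_if b f g); c1
  | |- C1 (fun x => Nat.b2n (Nat.eqb (@?a x) (@?b x))) => apply (C1_eqb a b); c1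
  | |- C1 (fun x => Nat.b2n (Nat.leb (@?a x) (@?b x))) => apply (C1_leb a b); c1
  | |- C1 (fun x => Nat.b2n (andb (@?a x) (@?b x))) => apply (C1_andb a b); c1
  | |- C1 (fun x => Nat.b2n (negb (@?a x))) => apply (C1_negb a); c1
  | |- C1 (fun x => Nat.add (@?a x) (@?b x)) => apply (C1_add a b); c1
  | |- C1 (fun x => Nat.sub (@?a x) (@?b x)) => apply (C1_sub a b); c1
  | |- C1 (fun x => Nat.mul (@?a x) (@?b x)) => apply (C1_mul a b); c1
  | |- C1 (fun x => Nat.max (@?a x) (@?b x)) => apply (C1_max a b); c1
  | |- C1 (fun x => S (@?a x)) => apply (C1_Sc a); c1
  | |- C1 (fun x => pred (@?a x)) => apply (C1_predc a); c1
  | |- C1 (fun x => isz (@?a x)) => apply (C1_iszc a); c1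
  | |- C1 (fun x => cp (@?a x) (@?b x)) => apply (C1_cp a b); c1
  | |- C1 (fun x => p1 (@?a x)) => apply (C1_p1 a); c1
  | |- C1 (fun x => p2 (@?a x)) => apply (C1_p2 a); c1
  | |- C1 (fun x => Nat.iter (@?n x) ?f (@?z x)) => apply (C1_iterc f n z); c1
  | |- C1 (fun x => fold_b ?q ?cm (@?a x) (@?n x)) => apply (C1_fold q cm a n); c1
  | |- C1 (fun x => ?h (@?a x)) =>
      first [ apply (C1_comp h a); [solve [eauto with c1db] | c1]
            | progress (unfold h); cbv beta; c1 ]
  | |- C1 (fun x => ?h (@?a x) (@?b x)) =>
      first [ apply (C1_app2 h a b); [solve [eauto with c1db] | c1 | c1]
            | progress (unfold h); cbv beta; c1 ]
  | |- C1 (fun x => ?h (@?a x) (@?b x) (@?c x)) => progress (unfold h); cbv beta; c1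
  | |- C1 ?h => first [ solve [eauto with c1db] | progress (unfold h); cbv beta; c1 ]
  end.

Lemma C1_cnth : C1 (fun p => cnth (p1 p) (p2 p)).
Proof. c1. Qed.
Lemma C1_crev : C1 crev.
Proof. c1. Qed.
Hint Resolve C1_crev : c1db.

Fixpoint enc (c : code) : nat :=
  match c with
  | cZero => cp 0 0
  | cSucc => cp 1 0
  | cProj i => cp 2 i
  | cComp f gs => cp 3 (cp (enc f) (encl (map enc gs)))
  | cPrec f g => cp 4 (cp (enc f) (enc g))
  | cMu f => cp 5 (enc f)
  end.

Definition EvalS c xs K := cp (cp 0 (cp c xs)) K.
Definition RetS y K := cp (cp 1 y) K.

Definition step (s : nat) : nat :=
  let m := p1 s in let K := p2 s in
  if Nat.eqb (p1 m) 0 then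
    let c := p1 (p2 m) in let xs := p2 (p2 m) in
    let tag := p1 c in let d := p2 c in
    if Nat.eqb tag 0 then cp (cp 1 0) K
    else if Nat.eqb tag 1 then cp (cp 1 (S (chd xs))) K
    else if Nat.eqb tag 2 then cp (cp 1 (cnth d xs)) K
    else if Nat.eqb tag 3 then
      (if Nat.eqb (p2 d) 0 then cp (cp 0 (cp (p1 d) 0)) K
       else cp (cp 0 (cp (chd (p2 d)) xs))
               (ccons (cp 0 (cp (p1 d) (cp (ctl (p2 d)) (cp xs 0)))) K))
    else if Nat.eqb tag 4 then
      cp (cp 0 (cp (p1 d) (ctl xs)))
         (ccons (cp 1 (cp (p2 d) (cp 0 (cp (chd xs) (ctl xs))))) K)
    else
      cp (cp 0 (cp d (ccons 0 xs))) (ccons (cp 2 (cp d (cp 0 xs))) K)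
  else
    let y := p2 m in
    if Nat.eqb K 0 then s
    else
      let fr := chd K in let K' := ctl K in
      let ft := p1 fr in let fd := p2 fr in
      if Nat.eqb ft 0 then
        let f := p1 fd in let rest := p1 (p2 fd) in
        let xs := p1 (p2 (p2 fd)) in let acc := p2 (p2 (p2 fd)) in
        if Nat.eqb rest 0 then cp (cp 0 (cp f (crev (ccons y acc)))) K'
        else cp (cp 0 (cp (chd rest) xs))
                (ccons (cp 0 (cp f (cp (ctl rest) (cp xs (ccons y acc))))) K')
      else if Nat.eqb ft 1 then
        let g := p1 fd in let i := p1 (p2 fd) in
        let n := p1 (p2 (p2 fd)) in let xs := p2 (p2 (p2 fd)) in
        if Nat.eqb i n then cp (cp 1 y) K'
        else cp (cp 0 (cp g (ccons i (ccons y xs))))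
                (ccons (cp 1 (cp g (cp (S i) (cp n xs)))) K')
      else
        let f := p1 fd in let n := p1 (p2 fd) in let xs := p2 (p2 fd) in
        if Nat.eqb y 0 then cp (cp 1 n) K'
        else cp (cp 0 (cp f (ccons (S n) xs))) (ccons (cp 2 (cp f (cp (S n) xs))) K').

Lemma C1_step : C1 step.
Proof. unfold step. cbv zeta. c1. Qed.

Ltac stepsimp := unfold step, EvalS, RetS; cbv zeta; cbn [enc map encl];
  repeat (rewrite ?p1_cp, ?p2_cp, ?chd_cons, ?ctl_cons); simpl;
  repeat (rewrite ?p1_cp, ?p2_cp, ?chd_cons, ?ctl_cons).

Lemma st_zero xs K : step (EvalS (enc cZero) xs K) = RetS 0 K.
Proof. stepsimp; rewrite ?cnth_ok; try reflexivity. Qed.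
Lemma st_succ x xs K : step (EvalS (enc cSucc) (encl (x :: xs)) K) = RetS (S x) K.
Proof. stepsimp; rewrite ?cnth_ok; try reflexivity. Qed.
Lemma st_proj i xs K : step (EvalS (enc (cProj i)) (encl xs) K) = RetS (nth i xs 0) K.
Proof. stepsimp; rewrite ?cnth_ok; try reflexivity. Qed.
Lemma st_comp0 f xs K : step (EvalS (enc (cComp f [])) xs K) = EvalS (enc f) 0 K.
Proof. stepsimp; rewrite ?cnth_ok; try reflexivity. Qed.
Lemma st_comp1 f g gs xs K : step (EvalS (enc (cComp f (g :: gs))) xs K) =
  EvalS (enc g) xs (ccons (cp 0 (cp (enc f) (cp (encl (map enc gs)) (cp xs 0)))) K).
Proof. stepsimp; rewrite ?cnth_ok; try reflexivity. Qed.
Lemma st_prec f g n xs K : step (EvalS (enc (cPrec f g)) (encl (n :: xs)) K) =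
  EvalS (enc f) (encl xs) (ccons (cp 1 (cp (enc g) (cp 0 (cp n (encl xs))))) K).
Proof. stepsimp; rewrite ?cnth_ok; try reflexivity. Qed.
Lemma st_mu f xs K : step (EvalS (enc (cMu f)) xs K) =
  EvalS (enc f) (ccons 0 xs) (ccons (cp 2 (cp (enc f) (cp 0 xs))) K).
Proof. stepsimp; rewrite ?cnth_ok; try reflexivity. Qed.
Lemma st_halt y : step (RetS y 0) = RetS y 0.
Proof. stepsimp; rewrite ?cnth_ok; try reflexivity. Qed.
Lemma st_fcomp y f rest xs acc K :
  step (RetS y (ccons (cp 0 (cp f (cp rest (cp xs acc)))) K)) =
  if Nat.eqb rest 0 then EvalS f (crev (ccons y acc)) K
  else EvalS (chd rest) xs (ccons (cp 0 (cp f (cp (ctl rest) (cp xs (ccons y acc))))) K).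
Proof. stepsimp; rewrite ?cnth_ok; try reflexivity. Qed.
Lemma st_fprec y g i n xs K :
  step (RetS y (ccons (cp 1 (cp g (cp i (cp n xs)))) K)) =
  if Nat.eqb i n then RetS y K
  else EvalS g (ccons i (ccons y xs)) (ccons (cp 1 (cp g (cp (S i) (cp n xs)))) K).
Proof. stepsimp; try reflexivity. Qed.
Lemma st_fmu y f n xs K :
  step (RetS y (ccons (cp 2 (cp f (cp n xs))) K)) =
  if Nat.eqb y 0 then RetS n K
  else EvalS f (ccons (S n) xs) (ccons (cp 2 (cp f (cp (S n) xs))) K).
Proof. stepsimp; try reflexivity. Qed.

Definition reach s t := exists n, Nat.iter n step s = t.
Lemma reach_refl s : reach s s.
Proof. exists 0; reflexivity. Qed.
Lemma reach_trans s t u : reach s t -> reach t u -> reach s u.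
Proof.
  intros [n Hn] [m Hm]. exists (m + n). rewrite Nat.iter_add. congruence.
Qed.
Lemma reach_step s t u : step s = t -> reach t u -> reach s u.
Proof. intros H [m Hm]. exists (m + 1). rewrite Nat.iter_add. simpl. congruence. Qed.

Definition code_ind' (P : code -> Prop) (H0 : P cZero) (H1 : P cSucc)
  (H2 : forall i, P (cProj i))
  (H3 : forall f gs, P f -> Forall P gs -> P (cComp f gs))
  (H4 : forall f g, P f -> P g -> P (cPrec f g))
  (H5 : forall f, P f -> P (cMu f)) : forall c, P c :=
  fix F c := match c return P c with
  | cZero => H0 | cSucc => H1 | cProj i => H2 i
  | cComp f gs => H3 f gs (F f)
      ((fix G l := match l return Forall P l with
                  | [] => Forall_nil P
                  | g :: l => Forall_cons g (F g) (G l) end) gs)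
  | cPrec f g => H4 f g (F f) (F g)
  | cMu f => H5 f (F f)
  end.

Definition Pc (c : code) : Prop :=
  forall xs y, eval c xs y -> forall K, reach (EvalS (enc c) (encl xs) K) (RetS y K).

Lemma comp_list F K : forall gs g, Forall Pc (g :: gs) -> forall xs ys acc,
  eval_list (g :: gs) xs ys ->
  reach (EvalS (enc g) (encl xs) (ccons (cp 0 (cp F (cp (encl (map enc gs)) (cp (encl xs) (encl acc))))) K))
        (EvalS F (encl (rev acc ++ ys)) K).
Proof.
  induction gs; intros g HF xs ys acc Hl; inversion HF; subst; inversion Hl; subst.
  - eapply reach_trans. apply H1. eassumption.
    eapply reach_step. apply st_fcomp. cbv beta. simpl. inversion H6; subst.
    replace (ccons y (encl acc)) with (encl (y :: acc)) by reflexivity.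
    rewrite crev_ok. apply reach_refl.
  - eapply reach_trans. apply H1. eassumption.
    eapply reach_step. apply st_fcomp. cbv beta. simpl map. simpl encl.
    destruct (Nat.eqb_spec (ccons (enc a) (encl (map enc gs))) 0).
    exfalso; eapply ccons_neq0; eauto.
    rewrite chd_cons, ctl_cons.
    replace (ccons y (encl acc)) with (encl (y :: acc)) by reflexivity.
    eapply reach_trans. apply (IHgs a H2 xs ys0 (y :: acc) H6).
    simpl. rewrite <- app_assoc. apply reach_refl.
Qed.

Lemma complete_all : forall c, Pc c.
Proof.
  apply code_ind'; unfold Pc.
  - intros xs y H K. inversion H; subst. eapply reach_step. apply st_zero. apply reach_refl.
  - intros xs y H K. inversion H; subst. eapply reach_step. apply st_succ. apply reach_refl.
  - intros i xs y H K. inversion H; subst. eapply reach_step. apply st_proj. apply reach_refl.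
  - intros f gs IHf IHgs xs y H K. inversion H; subst. destruct gs as [|g gs].
    + match goal with Hl : eval_list [] _ _ |- _ => inversion Hl; subst end.
      eapply reach_step. apply st_comp0. apply (IHf []); assumption.
    + match goal with Hl : eval_list _ _ ?ys, Hf : eval f ?ys y |- _ =>
      eapply reach_step; [apply st_comp1|];
      eapply reach_trans; [apply (comp_list (enc f) K gs g IHgs xs ys [] Hl)|];
      apply IHf; exact Hf end.
  - intros f g IHf IHg.
    assert (Loop : forall xs' m r, eval (cPrec f g) (m :: xs') r -> forall N K, m <= N ->
      reach (EvalS (enc f) (encl xs') (ccons (cp 1 (cp (enc g) (cp 0 (cp N (encl xs'))))) K))
            (RetS r (ccons (cp 1 (cp (enc g) (cp m (cp N (encl xs'))))) K))).
    { intros xs'. induction m; intros r Hr N K HN.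
      - inversion Hr; subst. apply IHf. assumption.
      - inversion Hr as [| | | | |? ? ? ? r0 ? Ha Hb|]; subst.
        eapply reach_trans. apply (IHm r0 Ha N K). lia.
        eapply reach_step. apply st_fprec. cbv beta. destruct (Nat.eqb_spec m N). lia.
        apply (IHg (m :: r0 :: xs')). assumption. }
    intros xs y H K. destruct xs as [|n xs0]. inversion H.
    eapply reach_step. apply st_prec. eapply reach_trans. apply (Loop xs0 n y H n K). lia.
    eapply reach_step. apply st_fprec. cbv beta. rewrite Nat.eqb_refl. apply reach_refl.
  - intros f IHf xs n H K. inversion H as [| | | | | |? ? ? Hz Hlt]; subst.
    assert (Loop : forall m, m <= n ->
      reach (EvalS (enc f) (ccons 0 (encl xs)) (ccons (cp 2 (cp (enc f) (cp 0 (encl xs)))) K))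
            (EvalS (enc f) (ccons m (encl xs)) (ccons (cp 2 (cp (enc f) (cp m (encl xs)))) K))).
    { induction m; intros Hm. apply reach_refl.
      eapply reach_trans. apply IHm. lia.
      destruct (Hlt m) as [k Hk]. lia.
      eapply reach_trans. apply (IHf (m :: xs) (S k) Hk).
      eapply reach_step. apply st_fmu. cbv beta. simpl. apply reach_refl. }
    eapply reach_step. apply st_mu. eapply reach_trans. apply (Loop n). lia.
    eapply reach_trans. apply (IHf (n :: xs) 0 Hz).
    eapply reach_step. apply st_fmu. cbv beta. simpl. apply reach_refl.
Qed.

Definition run (t s : nat) : nat := Nat.iter t step s.

Lemma run_halt_fix y t : run t (RetS y 0) = RetS y 0.
Proof. unfold run. induction t; simpl; auto. rewrite IHt. apply st_halt. Qed.

Lemma run_mono s y t t' : t <= t' -> run t s = RetS y 0 -> run t' s = RetS y 0.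
Proof.
  intros Ht H. unfold run in *. replace t' with ((t' - t) + t) by lia.
  rewrite Nat.iter_add. rewrite H. apply run_halt_fix.
Qed.

Lemma complete1 c x y : eval c [x] y ->
  exists t, run t (EvalS (enc c) (ccons x 0) 0) = RetS y 0.
Proof.
  intro H. destruct (complete_all c [x] y H 0) as [t Ht]. exists t. exact Ht.
Qed.

Lemma pigeon n m (f : nat -> nat) : (forall k, k < n -> f k < m) ->
  (forall k k', k < n -> k' < n -> f k = f k' -> k = k') -> n <= m.
Proof.
  intros Hr Hi.
  assert (ND : NoDup (map f (seq 0 n))).
  { apply NoDup_map_NoDup_ForallPairs. intros a b Ha Hb. apply in_seq in Ha, Hb.
    apply Hi; lia. apply seq_NoDup. }
  assert (IN : incl (map f (seq 0 n)) (seq 0 m)).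
  { intros x Hx. apply in_map_iff in Hx. destruct Hx as [k [<- Hk]].
    apply in_seq in Hk. apply in_seq. specialize (Hr k). lia. }
  pose proof (NoDup_incl_length ND IN). rewrite length_map, !length_seq in H. exact H.
Qed.

Lemma fold_add_zero q a n : fold_b q Nat.add a n = 0 <-> forall y, y < n -> q (cp a y) = 0.
Proof.
  induction n; simpl. split; intros; auto; lia.
  split. intros H y Hy. assert (y < n \/ y = n) as [|] by lia.
  apply IHn; auto; lia. subst; lia.
  intros H. rewrite (proj2 IHn). rewrite H; auto. intros; apply H; lia.
Qed.

Lemma fold_add_mono q a n m : n <= m -> fold_b q Nat.add a n <= fold_b q Nat.add a m.
Proof. induction 1; simpl; lia. Qed.

Lemma fold_ext q q' c a a' n : (forall y, y < n -> q (cp a y) = q' (cp a' y)) ->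
  fold_b q c a n = fold_b q' c a' n.
Proof.
  induction n; simpl; intros H; auto. rewrite IHn, H; auto.
Qed.

Lemma fold_max_ub q a n y : y < n -> q (cp a y) <= fold_b q Nat.max a n.
Proof.
  induction n; simpl; intros. lia. assert (y < n \/ y = n) as [|] by lia.
  specialize (IHn H0). lia. subst; lia.
Qed.

Lemma fold_max_att q a n : 0 < n -> exists y, y < n /\ fold_b q Nat.max a n = q (cp a y).
Proof.
  induction n; intros. lia. simpl. destruct n.
  - exists 0. simpl. split; lia.
  - destruct IHn as [y [Hy E]]. lia. rewrite E.
    destruct (Nat.le_ge_cases (q (cp a y)) (q (cp a (S n)))).
    exists (S n). split. lia. lia. exists y. split. lia. lia.
Qed.

Lemma count_hit q a : (forall y, q (cp a y) <= 1) ->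
  (forall N, exists m, N <= m /\ q (cp a m) = 1) ->
  forall i, exists y, q (cp a y) = 1 /\ fold_b q Nat.add a y = i.
Proof.
  intros H01 Hinf.
  assert (Unb : forall i, exists n, i <= fold_b q Nat.add a n).
  { induction i. exists 0; lia. destruct IHi as [n Hn]. destruct (Hinf n) as [m [Hm Hq]].
    exists (S m). simpl. pose proof (fold_add_mono q a n m Hm). lia. }
  assert (Gen : forall i n, i < fold_b q Nat.add a n -> exists y, q (cp a y) = 1 /\ fold_b q Nat.add a y = i).
  { intros i n. induction n; simpl; intros. lia.
    destruct (Nat.lt_ge_cases i (fold_b q Nat.add a n)). auto.
    exists n. specialize (H01 n). split; lia. }
  intro i. destruct (Unb (S i)) as [n Hn]. apply (Gen i n). lia.
Qed.

Lemma mychoice (R : nat -> nat -> Prop) : (forall x, exists y, R x y) -> exists f, forall x, R x (f x).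
Proof.
  intro H. exists (fun x => proj1_sig (constructive_indefinite_description _ (H x))).
  intro x. exact (proj2_sig (constructive_indefinite_description _ (H x))).
Qed.

Definition Arel (x y : nat) : Prop := p1 x = p1 y.
Definition Astr : EqStr.
Proof.
  refine {| univ := fun _ => True; rel := Arel |}; unfold Arel; intros; auto; congruence.
Defined.

Section Cat.
Variable B : EqStr.
Variable uB : nat -> nat.
Hypothesis HuC : C1 uB.
Hypothesis Hu1 : forall x, univ B x <-> uB x = 1.
Hypothesis Hu01 : forall x, uB x <= 1.
Variable rB : nat -> nat -> nat.
Hypothesis HrC : C1 (fun p => rB (p1 p) (p2 p)).
Hypothesis Hr1 : forall x y, rel B x y <-> rB x y = 1.
Hypothesis Hr01 : forall x y, rB x y <= 1.
Variable h : nat -> nat.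
Hypothesis Hiso : is_iso B Astr h.

Definition PP x y := univ B y /\ rel B y x.
Definition Qp p := uB (p2 p) * rB (p2 p) (p1 p).
Definition mq p := Qp p * (S (p1 p) - p2 p).
Definition lead x := S x - fold_b mq Nat.max x (S x).
Definition isLn l := uB l * Nat.b2n (Nat.eqb (lead l) l).
Definition ci x := fold_b (fun p => isLn (p2 p)) Nat.add 0 (lead x).
Definition ri x := fold_b Qp Nat.add x x.
Definition FF x := cp (ci x) (ri x).

Lemma C1_FF : C1 FF.
Proof. c1. Qed.

Lemma Qp_le x y : Qp (cp x y) <= 1.
Proof. unfold Qp. rewrite p1_cp, p2_cp. specialize (Hu01 y). specialize (Hr01 y x). nia. Qed.
Lemma Qp_1 x y : Qp (cp x y) = 1 <-> PP x y.
Proof.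
  unfold Qp, PP. rewrite p1_cp, p2_cp, Hu1, Hr1. specialize (Hu01 y). specialize (Hr01 y x).
  split. intro; split; nia. intros [-> ->]. reflexivity.
Qed.
Lemma Qp_0 x y : ~ PP x y -> Qp (cp x y) = 0.
Proof. intro H. pose proof (Qp_le x y). rewrite <- Qp_1 in H. lia. Qed.

Lemma lead_spec x : univ B x -> PP x (lead x) /\ lead x <= x /\ forall y, PP x y -> lead x <= y.
Proof.
  intro Hx.
  assert (Pxx : PP x x) by (split; auto; apply rel_refl; auto).
  assert (Hm : mq (cp x x) = 1).
  { unfold mq. rewrite p1_cp, p2_cp. rewrite (proj2 (Qp_1 x x) Pxx). lia. }
  pose proof (fold_max_ub mq x (S x) x ltac:(lia)) as Hub. rewrite Hm in Hub.
  destruct (fold_max_att mq x (S x) ltac:(lia)) as [y0 [Hy0 E]].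
  assert (Ey : mq (cp x y0) = Qp (cp x y0) * (S x - y0)) by (unfold mq; rewrite p1_cp, p2_cp; reflexivity).
  pose proof (Qp_le x y0).
  assert (Q1 : Qp (cp x y0) = 1) by nia.
  assert (Ll : lead x = y0) by (unfold lead; rewrite E, Ey, Q1; lia).
  rewrite Ll. split. apply Qp_1; auto. split. lia.
  intros y Hy. destruct (Nat.lt_ge_cases x y). lia.
  pose proof (fold_max_ub mq x (S x) y ltac:(lia)).
  unfold mq in H1. rewrite p1_cp, p2_cp, (proj2 (Qp_1 x y) Hy) in H1. fold mq in H1. rewrite E, Ey, Q1 in H1. lia.
Qed.

Lemma PP_class x x' y : rel B x x' -> (PP x y <-> PP x' y).
Proof.
  intros R. unfold PP. split; intros [U R']; split; auto.
  eapply rel_trans; eauto. eapply rel_trans; eauto. apply rel_sym; auto.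
Qed.

Lemma lead_eq x x' : univ B x -> univ B x' -> rel B x x' -> lead x = lead x'.
Proof.
  intros U U' R. destruct (lead_spec x U) as [P1 [_ M1]]. destruct (lead_spec x' U') as [P2 [_ M2]].
  apply Nat.le_antisymm. apply M1. apply (PP_class x x'); auto.
  apply M2. apply (PP_class x x'); auto.
Qed.

Lemma lead_lead x : univ B x -> univ B (lead x) /\ lead (lead x) = lead x.
Proof.
  intro U. destruct (lead_spec x U) as [[U' R] _]. split; auto.
  apply lead_eq; auto.
Qed.

Lemma rel_lead x x' : univ B x -> univ B x' -> (rel B x x' <-> lead x = lead x').
Proof.
  intros U U'. split. apply lead_eq; auto.
  intro E. destruct (lead_spec x U) as [[_ R1] _]. destruct (lead_spec x' U') as [[_ R2] _].
  rewrite E in R1. eapply rel_trans. apply rel_sym. exact R1. exact R2.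
Qed.

Lemma isLn_1 l : isLn l = 1 <-> univ B l /\ lead l = l.
Proof.
  unfold isLn. rewrite Hu1. specialize (Hu01 l).
  destruct (Nat.eqb_spec (lead l) l); simpl; split; intros; try nia; intuition.
Qed.
Lemma isLn_le l : isLn l <= 1.
Proof. unfold isLn. specialize (Hu01 l). destruct (Nat.eqb (lead l) l); simpl; lia. Qed.

Lemma ci_strict x x' : univ B x -> lead x < lead x' -> ci x < ci x'.
Proof.
  intros U L. unfold ci.
  pose proof (fold_add_mono (fun p => isLn (p2 p)) 0 (S (lead x)) (lead x') L).
  simpl in H. rewrite p2_cp in H.
  destruct (lead_lead x U). assert (isLn (lead x) = 1) by (apply isLn_1; auto). lia.
Qed.

Lemma ci_lead x x' : univ B x -> univ B x' -> ci x = ci x' -> lead x = lead x'.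
Proof.
  intros U U' E. destruct (Nat.lt_trichotomy (lead x) (lead x')) as [L|[L|L]]; auto.
  apply ci_strict in L; auto; lia. apply ci_strict in L; auto; lia.
Qed.

Lemma Qp_class x x' y : rel B x x' -> Qp (cp x y) = Qp (cp x' y).
Proof.
  intro R. destruct (classic (PP x y)).
  rewrite (proj2 (Qp_1 x y) H). symmetry. apply Qp_1. apply (PP_class x x'); auto.
  rewrite (Qp_0 x y H). symmetry. apply Qp_0. rewrite <- (PP_class x x'); auto.
Qed.

Lemma ri_strict x x' : univ B x -> univ B x' -> rel B x x' -> x < x' -> ri x < ri x'.
Proof.
  intros U U' R L. unfold ri.
  pose proof (fold_add_mono Qp x' (S x) x' L). simpl in H.
  rewrite (fold_ext Qp Qp Nat.add x' x x) in H by (intros; symmetry; apply Qp_class; auto).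
  assert (Qp (cp x' x) = 1) by (apply Qp_1; split; auto; apply rel_sym; auto). lia.
Qed.

Lemma class_inf l : univ B l -> forall N, exists m, N <= m /\ PP l m.
Proof.
  intros U N. destruct Hiso as [[_ [Hinj Hrel]] Hsur].
  destruct (mychoice (fun j m => univ B m /\ h m = cp (p1 (h l)) j)) as [g Hg].
  { intro j. destruct (Hsur (cp (p1 (h l)) j) I) as [m [Um Em]]. eauto. }
  apply NNPP. intro Hn.
  assert (Hlt : forall j, j < S N -> g j < N).
  { intros j _. destruct (Nat.lt_ge_cases (g j) N); auto. exfalso. apply Hn. exists (g j).
    split; auto. destruct (Hg j) as [Uj Ej]. split; auto. apply Hrel; auto.
    simpl. unfold Arel. rewrite Ej, p1_cp. reflexivity. }
  assert (S N <= N); [|lia]. apply (pigeon (S N) N g Hlt).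
  intros k k' _ _ E. destruct (Hg k) as [_ E1]. destruct (Hg k') as [_ E2].
  rewrite E in E1. rewrite E1 in E2. apply cp_inj in E2. lia.
Qed.

Lemma leaders_inf : forall N, exists m, N <= m /\ univ B m /\ lead m = m.
Proof.
  intros N. destruct Hiso as [[_ [Hinj Hrel]] Hsur].
  destruct (mychoice (fun i m => univ B m /\ h m = cp i 0)) as [g Hg].
  { intro i. destruct (Hsur (cp i 0) I) as [m [Um Em]]. eauto. }
  apply NNPP. intro Hn.
  assert (Hlt : forall j, j < S N -> lead (g j) < N).
  { intros j _. destruct (Nat.lt_ge_cases (lead (g j)) N); auto. exfalso. apply Hn.
    exists (lead (g j)). split; auto. apply lead_lead. apply Hg. }
  assert (S N <= N); [|lia]. apply (pigeon (S N) N (fun j => lead (g j)) Hlt).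
  intros k k' _ _ E. destruct (Hg k) as [U1 E1]. destruct (Hg k') as [U2 E2].
  apply rel_lead in E; auto. apply Hrel in E; auto. simpl in E. unfold Arel in E.
  rewrite E1, E2, !p1_cp in E. exact E.
Qed.

Lemma FF_iso : is_iso B Astr FF.
Proof.
  assert (Rel : forall x y, univ B x -> univ B y -> (rel B x y <-> rel Astr (FF x) (FF y))).
  { intros x y U V. simpl. unfold Arel, FF. rewrite !p1_cp. rewrite rel_lead; auto.
    split. intro E. unfold ci. rewrite E. reflexivity. apply ci_lead; auto. }
  split. split. simpl; auto. split.
  - intros x y U V E. unfold FF in E. apply cp_inj in E. destruct E as [E1 E2].
    assert (R : rel B x y) by (apply rel_lead; auto; apply ci_lead; auto).
    destruct (Nat.lt_trichotomy x y) as [L|[L|L]]; auto.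
    apply ri_strict in L; auto; lia.
    apply ri_strict in L; auto; try lia. apply rel_sym; auto.
  - exact Rel.
  - intros y _. 
    destruct (count_hit (fun p => isLn (p2 p)) 0) with (i := p1 y) as [l [Hl Cl]].
    { intro; apply isLn_le. }
    { intro N. destruct (leaders_inf N) as [m [Hm Lm]]. exists m. split; auto.
      rewrite p2_cp. apply isLn_1. auto. }
    rewrite p2_cp in Hl. apply isLn_1 in Hl. destruct Hl as [Ul Ll].
    destruct (count_hit Qp l) with (i := p2 y) as [x [Hx Cx]].
    { intro; apply Qp_le. }
    { intro N. destruct (class_inf l Ul N) as [m [Hm Pm]]. exists m. split; auto. apply Qp_1; auto. }
    apply Qp_1 in Hx. destruct Hx as [Ux Rx].
    exists x. split; auto. unfold FF. rewrite <- (cp_p y). f_equal.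
    + unfold ci. rewrite (lead_eq x l); auto. rewrite Ll. exact Cl.
    + unfold ri. rewrite <- Cx. apply fold_ext. intros; apply Qp_class; auto.
Qed.

End Cat.

Hint Resolve C1_step : c1db.

Definition stt e x t := run t (EvalS e (ccons x 0) 0).
Definition nh st := 1 - Nat.b2n (Nat.eqb (p1 (p1 st)) 1 && Nat.eqb (p2 st) 0).
Definition Hn e t := fold_b (fun p => nh (stt (p1 (p1 p)) (cp (p2 p) 0) (p2 (p1 p)))) Nat.add (cp e t) (S (2*e)).
Definition tgq p := p1 (p2 (p1 (stt (p1 (p1 p)) (cp (p2 p) 0) (p2 (p1 p))))).
Definition tg e t := fold_b tgq Nat.max (cp e t) (S (2*e)).
Definition killq p := Nat.b2n (Nat.leb (p2 p) (p2 (p1 p)) && Nat.eqb (Hn (p2 p) (p2 (p1 p))) 0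
   && Nat.eqb (tg (p2 p) (p2 (p1 p))) (p1 (p1 p)) && Nat.leb (2 * p2 p) (p1 (p1 p))).
Definition kb z := fold_b killq Nat.add z (S (p2 z)).
Definition uBn z := isz (kb z).

Lemma C1_uBn : C1 uBn.
Proof. unfold uBn, kb, killq, tg, tgq, Hn, nh, stt. c1. Qed.

Definition halted st := p1 (p1 st) = 1 /\ p2 st = 0.
Lemma nh_0 st : nh st = 0 <-> halted st.
Proof.
  unfold nh, halted. destruct (Nat.eqb_spec (p1 (p1 st)) 1), (Nat.eqb_spec (p2 st) 0); simpl;
  split; intros; try lia; intuition.
Qed.
Lemma halted_ret st : halted st -> st = RetS (p2 (p1 st)) 0.
Proof.
  intros [H1 H2]. unfold RetS. rewrite <- H1, <- H2, !cp_p. reflexivity.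
Qed.
Lemma halted_RetS y : halted (RetS y 0).
Proof. unfold halted, RetS. rewrite !p1_cp, p2_cp. auto. Qed.
Lemma stt_mono e x t t' : halted (stt e x t) -> t <= t' -> stt e x t' = stt e x t.
Proof.
  intros H L. apply halted_ret in H. unfold stt in *. rewrite H. eapply run_mono; eauto.
Qed.

Lemma Hn_0 e t : Hn e t = 0 <-> forall i, i < S (2*e) -> halted (stt e (cp i 0) t).
Proof.
  unfold Hn. rewrite fold_add_zero. split; intros H i Hi; specialize (H i Hi);
  rewrite ?p1_cp, ?p2_cp in *; apply nh_0; auto.
Qed.
Lemma Hn_mono e t t' : Hn e t = 0 -> t <= t' -> Hn e t' = 0.
Proof.
  rewrite !Hn_0. intros H L i Hi. rewrite (stt_mono e (cp i 0) t t'); auto.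
Qed.
Lemma tg_stable e t t' : Hn e t = 0 -> t <= t' -> tg e t' = tg e t.
Proof.
  intros H L. rewrite Hn_0 in H. unfold tg. apply fold_ext. intros i Hi. unfold tgq.
  rewrite !p1_cp, !p2_cp. rewrite (stt_mono e (cp i 0) t t'); auto.
Qed.
Lemma tg_stable2 e t t' : Hn e t = 0 -> Hn e t' = 0 -> tg e t' = tg e t.
Proof.
  intros H H'. destruct (Nat.le_ge_cases t t'). apply tg_stable; auto. symmetry; apply tg_stable; auto.
Qed.

Lemma univ_cp k t : uBn (cp k t) = 1 <-> ~ exists e, e <= t /\ Hn e t = 0 /\ tg e t = k /\ 2 * e <= k.
Proof.
  unfold uBn, kb. rewrite p2_cp. split.
  - intros H [e [L [H0 [Tg L2]]]].
    destruct (fold_b killq Nat.add (cp k t) (S t)) eqn:E; [|discriminate].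
    rewrite fold_add_zero in E. specialize (E e ltac:(lia)). unfold killq in E.
    rewrite !p1_cp, !p2_cp in E. rewrite H0, Tg in E.
    destruct (Nat.leb_spec e t); [|lia]. rewrite !Nat.eqb_refl in E.
    destruct (Nat.leb_spec (2*e) k); [|lia]. simpl in E. discriminate E.
  - intros H. assert (fold_b killq Nat.add (cp k t) (S t) = 0) as ->; [|reflexivity].
    apply fold_add_zero. intros e He. unfold killq. rewrite !p1_cp, !p2_cp.
    destruct (Nat.leb_spec e t), (Nat.eqb_spec (Hn e t) 0), (Nat.eqb_spec (tg e t) k),
      (Nat.leb_spec (2*e) k); simpl; auto. exfalso; apply H; eauto.
Qed.

Lemma uBn_le z : uBn z <= 1.
Proof. unfold uBn. destruct (kb z); simpl; lia. Qed.

Definition Brel z z' := uBn z = 1 /\ uBn z' = 1 /\ p1 z = p1 z'.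
Definition Bstr : EqStr.
Proof.
  refine {| univ := fun z => uBn z = 1; rel := Brel |}; unfold Brel; intros; intuition congruence.
Defined.

Lemma survive N : exists k, N <= k /\ forall t, uBn (cp k t) = 1.
Proof.
  apply NNPP. intro Hn0.
  assert (Hk : forall j, exists e, j < N + 2 -> exists t, e <= t /\ Hn e t = 0 /\ tg e t = N + j /\ 2 * e <= N + j).
  { intro j. destruct (Nat.lt_ge_cases j (N + 2)) as [L|L]; [|exists 0; lia].
    apply NNPP. intro C. apply Hn0. exists (N + j). split. lia. intro t.
    apply univ_cp. intros [e [A1 [A2 [A3 A4]]]]. apply C. exists e. intros _. exists t. auto. }
  destruct (mychoice _ Hk) as [ek Hek].
  assert (N + 2 <= N + 1); [|lia].
  apply (pigeon (N + 2) (N + 1) ek).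
  - intros j Hj. destruct (Hek j Hj) as [t [_ [_ [_ L]]]]. lia.
  - intros j j' Hj Hj' E. destruct (Hek j Hj) as [t [_ [H1 [T1 _]]]].
    destruct (Hek j' Hj') as [t' [_ [H2 [T2 _]]]]. rewrite E in H1, T1.
    rewrite (tg_stable2 (ek j') t t') in T2 by auto. lia.
Qed.

Fixpoint sseq (sv : nat -> nat) (i : nat) : nat :=
  match i with 0 => sv 0 | S i => sv (S (sseq sv i)) end.

Lemma bi_emb : bi_embeddable Astr Bstr.
Proof.
  destruct (mychoice (fun N k => N <= k /\ forall t, uBn (cp k t) = 1)) as [sv Hsv].
  { apply survive. }
  assert (Inc : forall i j, i < j -> sseq sv i < sseq sv j).
  { intros i j L. induction L; simpl; destruct (Hsv (S (sseq sv i))); [lia|].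
    destruct (Hsv (S (sseq sv m))). lia. }
  assert (Inj : forall i j, sseq sv i = sseq sv j -> i = j).
  { intros i j E. destruct (Nat.lt_trichotomy i j) as [L|[L|L]]; auto; apply Inc in L; lia. }
  assert (Sv : forall i t, uBn (cp (sseq sv i) t) = 1).
  { destruct i; simpl; intro t; apply Hsv. }
  split.
  - exists (fun x => cp (sseq sv (p1 x)) (p2 x)). split; [|split].
    + intros x _. simpl. apply Sv.
    + intros x y _ _ E. apply cp_inj in E. destruct E as [E1 E2]. apply Inj in E1.
      rewrite <- (cp_p x), <- (cp_p y). congruence.
    + intros x y _ _. simpl. unfold Arel, Brel. rewrite !p1_cp. split.
      intro E. rewrite E. auto. intros [_ [_ E]]. auto.
  - exists (fun x => x). split; [|split].
    + simpl; auto.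
    + auto.
    + intros x y Ux Uy. simpl in *. unfold Arel, Brel. intuition.
Qed.

Lemma comp_pred_of (P : nat -> Prop) f : C1 f -> (forall x, P x -> f x = 1) -> (forall x, ~ P x -> f x = 0) -> computable_pred P.
Proof.
  intros [c Hc] H1 H0. exists c. intro x. split; intro H; [rewrite <- (H1 x H) | rewrite <- (H0 x H)]; apply Hc.
Qed.
Lemma comp_rel_of (R : nat -> nat -> Prop) f : C2 f -> (forall x y, R x y -> f x y = 1) -> (forall x y, ~ R x y -> f x y = 0) -> computable_rel R.
Proof.
  intros [c Hc] H1 H0. exists c. intros x y. split; intro H; [rewrite <- (H1 x y H) | rewrite <- (H0 x y H)]; apply Hc.
Qed.

Lemma Bstr_comp : computable_str Bstr.
Proof.
  split.
  - apply (comp_pred_of _ uBn C1_uBn). auto. simpl. intros x H. pose proof (uBn_le x). lia.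
  - apply (comp_rel_of _ (fun z z' => uBn z * uBn z' * Nat.b2n (Nat.eqb (p1 z) (p1 z')))).
    + eapply C2_ext. apply (C2_of_C1 (fun p => uBn (p1 p) * uBn (p2 p) * Nat.b2n (Nat.eqb (p1 (p1 p)) (p1 (p2 p))))).
      c1. intros; simpl. rewrite !p1_cp, !p2_cp. reflexivity.
    + simpl. unfold Brel. intros x y [-> [-> ->]]. rewrite Nat.eqb_refl. reflexivity.
    + simpl. unfold Brel. intros x y H. pose proof (uBn_le x). pose proof (uBn_le y).
      destruct (Nat.eqb_spec (p1 x) (p1 y)); simpl; [|lia].
      assert (uBn x = 0 \/ uBn y = 0) as [-> | ->] by (destruct (uBn x) as [|[|]] eqn:?, (uBn y) as [|[|]] eqn:?; intuition lia); lia.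
Qed.

Lemma collect (Pr : nat -> nat -> Prop) : (forall i, exists t, forall t', t <= t' -> Pr i t') ->
  forall n, exists T, forall i t', i < n -> T <= t' -> Pr i t'.
Proof.
  intros H n. induction n. exists 0; intros; lia.
  destruct IHn as [T HT]. destruct (H n) as [t Ht]. exists (Nat.max T t).
  intros i t' Hi Ht'. assert (i < n \/ i = n) as [|] by lia. apply HT; auto; lia. subst; apply Ht; lia.
Qed.

Lemma not_bi : ~ comp_bi_emb_categorical Astr.
Proof.
  intro H. destruct (H Bstr Bstr_comp bi_emb) as [f [g [[c Hc] [_ [Ef _]]]]].
  destruct Ef as [Eu [Ei Er]]. simpl in Eu, Ei, Er.
  set (e := enc c).
  assert (Hall : forall x, exists t, forall t', t <= t' -> stt e x t' = RetS (f x) 0).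
  { intro x. destruct (complete1 c x (f x) (Hc x)) as [t Ht]. exists t. intros t' L.
    unfold stt. eapply run_mono; eauto. }
  destruct (collect (fun i t' => stt e (cp i 0) t' = RetS (f (cp i 0)) 0)
    (fun i => Hall (cp i 0)) (S (2*e))) as [T1 HT1].
  set (T0 := Nat.max T1 e).
  assert (HnT : Hn e T0 = 0).
  { apply Hn_0. intros i Hi. rewrite HT1 by lia. apply halted_RetS. }
  set (v := fun i => p1 (f (cp i 0))).
  assert (Tq : forall i, i < S (2*e) -> tgq (cp (cp e T0) i) = v i).
  { intros i Hi. unfold tgq. rewrite !p1_cp, !p2_cp. rewrite HT1 by lia. unfold RetS, v.
    rewrite p1_cp, p2_cp. reflexivity. }
  assert (Vinj : forall i i', v i = v i' -> i = i').
  { intros i i' E. assert (Arel (cp i 0) (cp i' 0)).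
    { apply Er; auto. unfold Brel. split; auto. }
    unfold Arel in H0. rewrite !p1_cp in H0. auto. }
  assert (Big : exists i, i < S (2*e) /\ 2 * e <= v i).
  { apply NNPP. intro C. assert (S (2*e) <= 2 * e); [|lia].
    apply (pigeon (S (2*e)) (2*e) v).
    intros k Hk. destruct (Nat.lt_ge_cases (v k) (2*e)); auto. exfalso; apply C; eauto.
    intros; auto. }
  destruct Big as [ib [Hib Vib]].
  set (k := tg e T0).
  assert (Kge : 2 * e <= k).
  { pose proof (fold_max_ub tgq (cp e T0) (S (2*e)) ib Hib). rewrite Tq in H0 by auto.
    unfold k, tg. lia. }
  destruct (fold_max_att tgq (cp e T0) (S (2*e))) as [is [His Eis]]. lia.
  rewrite Tq in Eis by auto. fold (tg e T0) in Eis. fold k in Eis.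
  assert (Dead : forall t, T0 <= t -> uBn (cp k t) <> 1).
  { intros t L U. apply univ_cp in U. apply U. exists e. split. unfold T0 in L; lia.
    split. eapply Hn_mono; eauto. split. rewrite (tg_stable e T0 t); auto. lia. }
  set (w := fun j => p2 (f (cp is j))).
  assert (P1 : forall j, p1 (f (cp is j)) = k).
  { intro j. assert (Brel (f (cp is j)) (f (cp is 0))) as [_ [_ E]].
    { apply Er; auto. unfold Arel. rewrite !p1_cp. auto. }
    rewrite E. rewrite Eis. reflexivity. }
  assert (S T0 <= T0); [|lia].
  apply (pigeon (S T0) T0 w).
  - intros j _. destruct (Nat.lt_ge_cases (w j) T0); auto. exfalso.
    apply (Dead (w j)); auto. unfold w. rewrite <- (P1 j), cp_p. apply Eu. auto.
  - intros j j' _ _ E. unfold w in E.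
    assert (f (cp is j) = f (cp is j')).
    { rewrite <- (cp_p (f (cp is j))), <- (cp_p (f (cp is j'))), !P1, E. reflexivity. }
    apply Ei in H0; auto. apply cp_inj in H0. lia.
Qed.

Lemma Astr_comp : computable_str Astr.
Proof.
  split.
  - apply (comp_pred_of _ (fun _ => 1)). apply C1_const. auto. simpl. intros x H; exfalso; auto.
  - apply (comp_rel_of _ (fun x y => Nat.b2n (Nat.eqb (p1 x) (p1 y)))).
    + eapply C2_ext. apply (C2_of_C1 (fun p => Nat.b2n (Nat.eqb (p1 (p1 p)) (p1 (p2 p))))).
      c1. intros; simpl. rewrite !p1_cp, !p2_cp. reflexivity.
    + simpl. unfold Arel. intros x y ->. rewrite Nat.eqb_refl. reflexivity.
    + simpl. unfold Arel. intros x y H. destruct (Nat.eqb_spec (p1 x) (p1 y)); auto. tauto.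
Qed.

Lemma Astr_cat : comp_categorical Astr.
Proof.
  intros B [[cu Hu] [cr Hr]] [h Hiso].
  set (uB := fun x => if excluded_middle_informative (univ B x) then 1 else 0).
  set (rB := fun x y => if excluded_middle_informative (rel B x y) then 1 else 0).
  assert (HuC : C1 uB).
  { exists cu. intro x. unfold uB. destruct (excluded_middle_informative (univ B x)); apply Hu; auto. }
  assert (HrC2 : C2 rB).
  { exists cr. intros x y. unfold rB. destruct (excluded_middle_informative (rel B x y)); apply Hr; auto. }
  assert (HrC : C1 (fun p => rB (p1 p) (p2 p))).
  { apply (C1_comp2 rB). auto. apply C1_p1, C1_id. apply C1_p2, C1_id. }
  exists (FF uB rB). split. apply C1_FF; auto.
  apply (FF_iso B uB) with (h := h); auto.
  - intro x. unfold uB. destruct (excluded_middle_informative (univ B x)); split; intros; auto; try lia; tauto.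
  - intro x. unfold uB. destruct (excluded_middle_informative (univ B x)); lia.
  - intros x y. unfold rB. destruct (excluded_middle_informative (rel B x y)); split; intros; auto; try lia; tauto.
  - intros x y. unfold rB. destruct (excluded_middle_informative (rel B x y)); lia.
Qed.

Theorem corollary2p8 :
  exists A : EqStr,
    computable_str A /\ comp_categorical A /\ ~ comp_bi_emb_categorical A.
Proof.
  exists Astr. split. apply Astr_comp. split. apply Astr_cat. apply not_bi.
Qed.
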